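(* Let $\mathcal{T}$ be a single-elimination tournament, $\sigma$ a scoring system, $u\in V(\mathcal{T})$, $\mathcal{B}=\{B_1,\dots,B_r\}$ a set of brackets of $\mathcal{T}$, and $\widetilde{B}_i$ the restriction of $B_i$ to $V(\mathcal{T}_u)$. Suppose that: (a) $\{\widetilde{B}_1,\dots,\widetilde{B}_r\}$ is a $\sigma_u$-resolving set for $\mathcal{T}_u$; (b) $B_i(x)\notin P(u)$ for all $i$ and all $x\in M(\mathcal{T})\setminus V(\mathcal{T}_u)$; and (c) for every pair of brackets $B,B'$ of $\mathcal{T}$ with $\mathrm{score}_\sigma(B_i,B)=\mathrm{score}_\sigma(B_i,B')$ for all $i$, we have for all $a\in P(\mathcal{T})\setminus P(u)$ and all $x\in M(\mathcal{T})$ that $B(x)=a$ if and only if $B'(x)=a$. Then $\mathcal{B}$ is a $\sigma$-resolving set for $\mathcal{T}$.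
   Context: A single-elimination tournament is a finite directed graph $\mathcal{T}$ such that: (a) $\mathcal{T}$ has exactly one sink (vertex with no out-neighbours); (b) every non-sink vertex has exactly one out-neighbour; (c) $\mathcal{T}$ has no directed cycles; (d) $|N^-(v)|\ne 1$ for every vertex $v$, where $N^-(v)$ denotes the set of in-neighbours of $v$. The players $P(\mathcal{T})$ are the sources and the matches are $M(\mathcal{T})=V(\mathcal{T})\setminus P(\mathcal{T})$. For a vertex $u$, $P(u)$ is the set of players $a$ for which there is a directed walk from $a$ to $u$ (length $0$ allowed). For $u\in V(\mathcal{T})$, $\mathcal{T}_u$ is the digraph obtained from $\mathcal{T}$ by deleting every vertex $v$ with $P(v)\not\subseteq P(u)$ (it is a single-elimination tournament), and $\sigma_u$ is the restriction of $\sigma$ to $M(\mathcal{T})\cap V(\mathcal{T}_u)=M(\mathcal{T}_u)$. A bracket is a function $B:V(\mathcal{T})\to P(\mathcal{T})$ with $B(a)=a$ for every player $a$ and $B(x)\in\{B(u):u\in N^-(x)\}$ for every match $x$. A scoring system is any function $\sigma:M(\mathcal{T})\to\mathbb{R}_{>0}$. For brackets $B,B'$ let $\mathrm{score}_\sigma(B,B')=\sum_{x\in M(\mathcal{T}):\,B(x)=B'(x)}\sigma(x)$. A set of brackets $\mathcal{B}$ is $\sigma$-resolving if for every pair of distinct brackets $B\ne B'$ there is $B_i\in\mathcal{B}$ with $\mathrm{score}_\sigma(B_i,B)\ne\mathrm{score}_\sigma(B_i,B')$ (and analogously for $\mathcal{T}_u,\sigma_u$). *)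

(* Defs.v *)
From HB Require Import structures.
From mathcomp Require Import all_boot all_order all_algebra.
Set Implicit Arguments. Unset Strict Implicit. Unset Printing Implicit Defensive.
Import Order.TTheory GRing.Theory Num.Theory.
Local Open Scope ring_scope.

(* Sub-tournaments T_u are represented as the induced subgraph on a vertex
   set S : {set V}; all notions below are relative to such an S
   (S = [set: V] gives the whole digraph). *)

Section Tournaments.
Variable V : finType.
Variable e : rel V.

Definition out_nb (v : V) : {set V} := [set w | e v w].
Definition in_nb_all (v : V) : {set V} := [set w | e w v].

Definition is_SET : Prop :=
  [/\ #|[set v | #|out_nb v| == 0%N]| = 1%N,
      (forall v, #|out_nb v| != 0%N -> #|out_nb v| = 1%N),
      (forall v w, e v w -> ~~ connect e w v) &
      (forall v, #|in_nb_all v| != 1%N)].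

Definition in_nb (S : {set V}) (v : V) : {set V} := [set w in S | e w v].
Definition players (S : {set V}) : {set V} := [set v in S | in_nb S v == set0].
Definition matches (S : {set V}) : {set V} := S :\: players S.

Definition Pof (u : V) : {set V} := [set a in players [set: V] | connect e a u].

Definition Tsub (u : V) : {set V} := [set v | Pof v \subset Pof u].

(* a bracket of the digraph induced on S (only its values on S matter) *)
Definition is_bracket (S : {set V}) (B : V -> V) : Prop :=
  [/\ (forall v, v \in S -> B v \in players S),
      (forall a, a \in players S -> B a = a) &
      (forall x, x \in matches S -> exists2 w, w \in in_nb S x & B x = B w)].

Variable R : realFieldType.

Definition score (S : {set V}) (sigma : V -> R) (B B' : V -> V) : R :=
  \sum_(x in matches S | B x == B' x) sigma x.

Definition resolving (S : {set V}) (sigma : V -> R) (r : nat) (Bs : 'I_r -> V -> V) : Prop :=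
  forall B B', is_bracket S B -> is_bracket S B' ->
    ~ {in S, B =1 B'} ->
    exists i : 'I_r, score S sigma (Bs i) B != score S sigma (Bs i) B'.

End Tournaments.

(* Main.v *)
Require Import Defs.
From HB Require Import structures.
From mathcomp Require Import all_boot all_order all_algebra.
Import Order.TTheory GRing.Theory Num.Theory.
Module G.
Set Implicit Arguments. Unset Strict Implicit.
Section G.
Variable V : finType.
Variable e : rel V.
Hypothesis SET : is_SET e.

Lemma out_uniq v w w' : e v w -> e v w' -> w = w'.
Proof.
case: SET => _ H2 _ _ ew ew'.
have : #|out_nb e v| != 0%N.
  by rewrite cards_eq0; apply/set0Pn; exists w; rewrite inE.
move/H2/eqP/cards1P=> [x Hx].
have : w \in out_nb e v by rewrite inE.
have : w' \in out_nb e v by rewrite inE.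
by rewrite Hx !inE => /eqP -> /eqP ->.
Qed.

Lemma acyc z v : e z v -> connect e v z -> False.
Proof. by case: SET => _ _ H3 _ /H3 /negP. Qed.

Lemma pred_step w a : connect e w a -> w != a ->
  exists2 z, e z a & connect e w z.
Proof.
move/connectP=> [p]; case/lastP: p => [|p z] /=.
  by move=> _ -> ; rewrite eqxx.
rewrite rcons_path last_rcons => /andP[pp ez] -> _.
exists (last w p) => //; apply/connectP; by exists p.
Qed.

Lemma succ_step y z : connect e y z -> y != z ->
  exists2 y', e y y' & connect e y' z.
Proof.
move/connectP=> [[|y' p]] /=; first by move=> _ ->; rewrite eqxx.
move=> /andP[ey pp] -> _; exists y' => //; apply/connectP; by exists p.
Qed.

Lemma comparable a y z : connect e a y -> connect e a z ->
  connect e y z \/ connect e z y.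
Proof.
move/connectP=> [p]; elim: p a => [|y' p IH] a /=.
  by move=> _ -> ; left.
move=> /andP[ey pp] ly az.
case: (eqVneq a z) => [<-|nz].
  right; apply/connectP; exists (y' :: p) => //=; by rewrite ey pp.
have [y'' ey'' cz] := succ_step az nz.
rewrite -(out_uniq ey ey'') in cz.
exact: (IH y' pp ly cz).
Qed.

Lemma meet_aux y z v : connect e y z -> e y v -> e z v -> y = z.
Proof.
move=> yz ey ez; case: (eqVneq y z) => // nz.
have [y' ey' cz] := succ_step yz nz.
rewrite -(out_uniq ey ey') in cz.
case: (acyc ez cz).
Qed.

Lemma meet a y z v : connect e a y -> connect e a z -> e y v -> e z v -> y = z.
Proof.
move=> ay az ey ez; case: (comparable ay az) => h.
  exact: meet_aux h ey ez.
by symmetry; exact: meet_aux h ez ey.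
Qed.

Definition msr v := #|[set w | connect e w v]|.

Lemma msr_lt y v : e y v -> (msr y < msr v)%N.
Proof.
move=> ey; apply: proper_card; apply/properP; split.
  apply/subsetP=> w; rewrite !inE => wy; apply: connect_trans wy _.
  exact: connect1.
exists v; first by rewrite inE connect0.
rewrite inE; apply/negP=> vy; exact: acyc ey vy.
Qed.

Lemma playerE v : v \in players e [set: V] -> forall w, e w v = false.
Proof.
rewrite inE => /andP[_ /eqP H] w; apply/negP=> ew.
have : w \in in_nb e [set: V] v by rewrite /in_nb !inE ew.
by rewrite H inE.
Qed.

Lemma notplayer v : v \notin players e [set: V] -> v \in matches e [set: V].
Proof. by move=> h; rewrite inE h inE. Qed.

Variable B : V -> V.
Hypothesis bB : is_bracket e [set: V] B.

Lemma strong (P : V -> Prop) :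
  (forall v, (forall y, e y v -> P y) -> P v) -> forall v, P v.
Proof.
move=> H v; have: (msr v < (msr v).+1)%N by [].
elim: (msr v).+1 {-2}v => // n IH x lt; apply: H => y ey.
apply: IH; exact: leq_trans (msr_lt ey) lt.
Qed.

Lemma Bconn v : connect e (B v) v.
Proof.
case: bB => _ Hp Hm; elim/strong: v => v IH.
case: (boolP (v \in players e [set: V])) => [/Hp -> | /notplayer /Hm [y]].
  exact: connect0.
rewrite inE => /andP[_ ey] ->; apply: connect_trans (IH y ey) _; exact: connect1.
Qed.

Lemma Bwin v w : connect e (B v) w -> connect e w v -> B w = B v.
Proof.
case: bB => _ Hp Hm; elim/strong: v w => v IH w bw wv.
case: (eqVneq w v) => [-> // | nwv].
have [z ez wz] := pred_step wv nwv.
case: (boolP (v \in players e [set: V])) => [/playerE pv | /notplayer /Hm [y]].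
  by rewrite pv in ez.
rewrite inE => /andP[_ ey] Bv; rewrite Bv in bw *.
have yz : y = z := meet (Bconn y) (connect_trans bw wz) ey ez.
subst z; exact: IH.
Qed.

End G.
End G.
Module M.
Import G.
Set Implicit Arguments. Unset Strict Implicit.
Local Open Scope ring_scope.
Section M.
Variable V : finType.
Variable e : rel V.
Hypothesis SET : is_SET e.
Variable u : V.

Lemma Tsub_in w v : e w v -> v \in Tsub e u -> w \in Tsub e u.
Proof.
rewrite /Tsub !inE => ew /subsetP H; apply/subsetP=> a aw; apply: H.
move: aw; rewrite /Pof !inE => /andP[-> aw] /=.
apply: connect_trans aw _; exact: connect1.
Qed.

Lemma in_nb_sub v : v \in Tsub e u -> in_nb e (Tsub e u) v = in_nb e [set: V] v.
Proof.
move=> vT; apply/setP=> w; rewrite /in_nb !inE.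
case ew: (e w v); rewrite ?andbF ?andbT //; by have := Tsub_in ew vT; rewrite inE => ->.
Qed.

Lemma playersT v : v \in Tsub e u ->
  (v \in players e (Tsub e u)) = (v \in players e [set: V]).
Proof. by move=> vT; rewrite /players !inE in_nb_sub //; move: vT; rewrite inE => ->. Qed.

Lemma matchesT x : (x \in matches e (Tsub e u)) =
  (x \in matches e [set: V]) && (x \in Tsub e u).
Proof.
rewrite /matches; case: (boolP (x \in Tsub e u)) => xT; [rewrite !in_setD playersT // | rewrite !in_setD].
  by rewrite xT in_setT !andbT.
by rewrite (negbTE xT) !andbF.
Qed.

Lemma bracketT B : is_bracket e [set: V] B -> is_bracket e (Tsub e u) B.
Proof.
move=> bB; have bB' := bB; case: bB' => H1 H2 H3; split.
- move=> v vT.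
  have BT : B v \in Tsub e u.
    move: vT; rewrite /Tsub !inE => /subsetP H; apply/subsetP=> a aB; apply: H.
    move: aB; rewrite /Pof !inE => /andP[-> aB] /=.
    apply: connect_trans aB (Bconn SET bB v).
  by rewrite playersT // H1 // inE.
- by move=> a aP; apply: H2; rewrite -playersT //; move: aP; rewrite /players inE => /andP[].
- move=> x; rewrite matchesT => /andP[xm xT].
  have [w wi Bw] := H3 x xm; exists w => //; by rewrite in_nb_sub.
Qed.

End M.
End M.
Import G M.
Local Open Scope ring_scope.

Theorem proposition5p4 (V : finType) (e : rel V) (R : realFieldType)
  (sigma : V -> R) (u : V) (r : nat) (Bs : 'I_r -> V -> V) :
  is_SET e ->
  (forall x, x \in matches e [set: V] -> 0 < sigma x) ->
  (forall i, is_bracket e [set: V] (Bs i)) ->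
  (* (a) the restrictions to V(T_u) are sigma_u-resolving for T_u *)
  resolving e (Tsub e u) sigma Bs ->
  (* (b) *)
  (forall i x, x \in matches e [set: V] -> x \notin Tsub e u ->
     Bs i x \notin Pof e u) ->
  (* (c) *)
  (forall B B', is_bracket e [set: V] B -> is_bracket e [set: V] B' ->
     (forall i, score e [set: V] sigma (Bs i) B = score e [set: V] sigma (Bs i) B') ->
     forall a, a \in players e [set: V] :\: Pof e u ->
     forall x, x \in matches e [set: V] -> (B x == a) = (B' x == a)) ->
  resolving e [set: V] sigma Bs.
Proof.
move=> SET _ brk Ha Hb Hc B B' bB bB' neq.
case: (boolP [exists i, score e [set: V] sigma (Bs i) B != score e [set: V] sigma (Bs i) B']).
  by move/existsP.
rewrite negb_exists => /forallP Hall.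
have Heq : forall i, score e [set: V] sigma (Bs i) B = score e [set: V] sigma (Bs i) B'.
  by move=> i; apply/eqP; move: (Hall i); rewrite negbK.
have Hc' := Hc B B' bB bB' Heq.
have dec : forall i (C : V -> V), score e [set: V] sigma (Bs i) C =
   score e (Tsub e u) sigma (Bs i) C +
   \sum_(x in matches e [set: V] | (Bs i x == C x) && (x \notin Tsub e u)) sigma x.
  move=> i C; rewrite /score (bigID (fun x => x \in Tsub e u)) /=.
  congr (_ + _).
    by apply: eq_bigl => x; rewrite matchesT; case: (x \in matches _ _); case: (x \in Tsub e u); rewrite ?andbF ?andbT.
  by apply: eq_bigl => x; rewrite andbA.
have HT : forall i, score e (Tsub e u) sigma (Bs i) B = score e (Tsub e u) sigma (Bs i) B'.
  move=> i; apply: (addIr (\sum_(x in matches e [set: V] | (Bs i x == B x) && (x \notin Tsub e u)) sigma x)).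
  rewrite -dec Heq dec; congr (_ + _).
  apply: eq_bigl => x; case xm: (x \in matches e [set: V]) => //=.
  case xT: (x \in Tsub e u); rewrite ?andbF ?andbT //=.
  have aP : Bs i x \in players e [set: V] :\: Pof e u.
    case: (brk i) => H1 _ _.
    by rewrite in_setD H1 ?in_setT // Hb // xT.
  by rewrite ![Bs i x == _]eq_sym (Hc' _ aP x xm).
have inT : {in Tsub e u, B =1 B'}.
  move=> v vT; apply/eqP; case: (boolP (B v == B' v)) => // nv.
  have [i Hi] := Ha B B' (bracketT SET u bB) (bracketT SET u bB') (fun h => negP nv (introT eqP (h v vT))).
  by rewrite HT eqxx in Hi.
exfalso; apply: neq => v _.
case: (boolP (v \in Tsub e u)) => vT; first exact: inT.
case: (boolP (v \in players e [set: V])) => [pv | /(notplayer) vm].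
  by case: bB => _ -> //; case: bB' => _ -> //.
apply/eqP; case: (boolP (B v == B' v)) => // nv.
have key : forall C, is_bracket e [set: V] C -> C v \in Pof e u -> C v = C u.
  move=> C bC CvP.
  have cu : connect e u v.
    move: CvP; rewrite /Pof inE => /andP[_ cCu].
    case: (G.comparable SET cCu (Bconn SET bC v)) => // vu.
    exfalso; move/negP: vT; apply; rewrite inE; apply/subsetP => a.
    rewrite /Pof !inE => /andP[-> av] /=; exact: connect_trans av vu.
  symmetry; apply: (Bwin SET bC) => //.
  by move: CvP; rewrite /Pof inE => /andP[].
have uT : u \in Tsub e u by rewrite inE subxx.
case: (boolP (B v \in Pof e u)) => BP; last first.
  have aP : B v \in players e [set: V] :\: Pof e u.
    case: bB => H1 _ _; by rewrite in_setD BP H1 ?in_setT.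
  by move: (Hc' _ aP v vm); rewrite eqxx eq_sym (negbTE nv).
case: (boolP (B' v \in Pof e u)) => BP'; last first.
  have aP : B' v \in players e [set: V] :\: Pof e u.
    case: bB' => H1 _ _; by rewrite in_setD BP' H1 ?in_setT.
  by move: (Hc' _ aP v vm); rewrite eqxx (negbTE nv).
by rewrite (key B bB BP) (key B' bB' BP') (inT u uT) eqxx in nv.
Qed.
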